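(* Let $q$ be a prime power, let $n\le m$, and let $\alpha\in\mathbb{F}_{q^m}$ be a normal element, i.e. $\{\alpha^{[0]},\dots,\alpha^{[m-1]}\}$ is a basis of $\mathbb{F}_{q^m}$ over $\mathbb{F}_q$. Let $d\ge2$ and let $\mathcal{C}\subseteq\mathbb{F}_{q^m}^n$ be the Gabidulin code $\{c: \sum_{j=0}^{n-1}\alpha^{[i+j]}c_j=0,\ i=0,\dots,d-2\}$. Let $c\in\mathcal{C}$, let $e\in\mathbb{F}_{q^m}^n$ have rank $\tau\le(d-1)/2$, and let $r=c+e$. Write $e=\sum_{j=1}^{\tau}L_jV_j$ with $L_j\in\mathbb{F}_q^n$ and $V_j\in\mathbb{F}_{q^m}$, and set $X_j=L_j^Th$ where $h=(\alpha^{[0]},\dots,\alpha^{[n-1]})^T$. Define the syndromes $S_\ell=\sum_{i=0}^{n-1}\alpha^{[i+\ell]}r_i$ for $\ell=0,\dots,d-2$ and $\tilde S_\ell=S_{d-2-\ell}^{[\ell-d+2]}$ for $\ell=0,\dots,d-2$. Let $\Gamma(x)=\sum_{i=0}^{\tau}\Gamma_ix^{[i]}$ be the minimal $q$-polynomial of $\{V_1,\dots,V_\tau\}$ and $\Lambda(x)=\sum_{i=0}^{\tau}\Lambda_ix^{[i]}$ the minimal $q$-polynomial of $\{X_1,\dots,X_\tau\}$. Extend $e$ to length $m$ by $e_n=\dots=e_{m-1}=0$, let $E(x)=\sum_{j=0}^{m-1}E_jx^{[j]}$ with $E_j=\sum_{i=0}^{m-1}e_i\alpha^{[i+j]}$ be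 its $q$-transform with respect to $\alpha$, and let $\bar E(x)$ be the full $q$-reverse of $E(x)$. Then $$\Gamma(x)\otimes E(x)\equiv0 \pmod{x^{[m]}-x},\qquad \Lambda(x)\otimes\bar E(x)\equiv0 \pmod{x^{[m]}-x}.$$ In particular, $\sum_{i=0}^{\tau}\Gamma_iS_{\ell-i}^{[i]}=0$ and $\sum_{i=0}^{\tau}\Lambda_i\tilde S_{\ell-i}^{[i]}=0$ for $\ell=\tau,\dots,d-2$.
   Context: $x^{[i]}$ denotes $x^{q^i}$ (negative $i$ interpreted modulo $m$, i.e. $a^{[i]}=a^{q^{i\bmod m}}$ for $a\in\mathbb{F}_{q^m}$). The rank of $v\in\mathbb{F}_{q^m}^n$ is the rank over $\mathbb{F}_q$ of the $n\times m$ matrix whose $i$th row is the coordinate vector of $v_i$ in a fixed $\mathbb{F}_q$-basis of $\mathbb{F}_{q^m}$. A $q$-polynomial over $\mathbb{F}_{q^m}$ is $\sum_if_ix^{[i]}$ with $f_i\in\mathbb{F}_{q^m}$; its $q$-degree is the largest $i$ with $f_i\ne0$. The minimal $q$-polynomial of a set $\mathcal{S}\subseteq\mathbb{F}_{q^m}$ is the unique $q$-polynomial $M(x)=\sum_{i=0}^tM_ix^{[i]}$ with $M_0=1$ and least $q$-degree $t$ whose roots include $\mathcal{S}$. Symbolic multiplication is composition $f(x)\otimes g(x)=f(g(x))$, and reduction modulo $x^{[m]}-x$ is the remainder upon division by $x^{q^m}-x$. Coefficients of length-$m$ sequences are indexed cyclically ($f_i=f_{i\bmod m}$), and the full $q$-reverse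 of $f(x)=\sum_{i=0}^{m-1}f_ix^{[i]}$ is $\bar f(x)=\sum_{i=0}^{m-1}f_{-i}^{[i]}x^{[i]}$. *)

(* Defs.v *)
From HB Require Import structures.
From mathcomp Require Import all_boot all_order all_algebra all_field.
Set Implicit Arguments. Unset Strict Implicit. Unset Printing Implicit Defensive.
Import GRing.Theory.
Local Open Scope ring_scope.

Section Defs.
Variables (F : finFieldType) (L : fieldExtType F).

Definition qq : nat := #|F|.
Definition mm : nat := \dim {:L}.

Definition fr (i : nat) (x : L) : L := x ^+ (qq ^ i).

Definition normal_elt (a : L) : Prop :=
  basis_of fullv [seq fr i a | i <- iota 0 mm].

Definition qrank (n : nat) (v : 'I_n -> L) : nat :=
  \rank (\matrix_(i < n, k < \dim (fullv : {vspace L}))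
           coord (vbasis (fullv : {vspace L})) k (v i)).

(* q-polynomials are represented as ordinary polynomials
   sum_i f_i X^(q^i); coefficient f_i is f`_(q^i). *)
Definition qpoly (f : {poly L}) : Prop :=
  forall k, (forall i, k <> (qq ^ i)%N) -> f`_k = 0.

Definition qcoef (f : {poly L}) (i : nat) : L := f`_(qq ^ i).

Definition qdeg (f : {poly L}) : nat :=
  \max_(i < size f | qcoef f i != 0) i.

Definition min_qpoly (S : L -> Prop) (M : {poly L}) : Prop :=
  [/\ qpoly M, qcoef M 0 = 1, (forall s, S s -> root M s) &
      forall f : {poly L}, qpoly f -> qcoef f 0 = 1 ->
        (forall s, S s -> root f s) -> (qdeg M <= qdeg f)%N].

Definition qpoly_of (g : nat -> L) : {poly L} :=
  \sum_(i < mm) g i *: 'X^(qq ^ i).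

Definition gabidulin (n d : nat) (a : L) (c : 'I_n -> L) : Prop :=
  forall i : nat, (i <= d - 2)%N -> \sum_(j < n) fr (i + j) a * c j = 0.

(* q-transform of e (extended by zeros to length m) w.r.t. alpha *)
Definition qtrans_coef (n : nat) (a : L) (e : 'I_n -> L) (j : nat) : L :=
  \sum_(i < n) e i * fr (i + j) a.

Definition qtrans (n : nat) (a : L) (e : 'I_n -> L) : {poly L} :=
  qpoly_of (qtrans_coef a e).

(* full q-reverse: bar f_i = f_{-i mod m}^[i] *)
Definition qrev_full (g : nat -> L) : {poly L} :=
  qpoly_of (fun i => fr i (g ((mm - i %% mm) %% mm)%N)).

Definition synd (n : nat) (a : L) (r : 'I_n -> L) (l : nat) : L :=
  \sum_(i < n) fr (i + l) a * r i.

(* tilde S_l = S_{d-2-l}^[l-d+2], exponent taken modulo m *)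
Definition synd_tilde (n d : nat) (a : L) (r : 'I_n -> L) (l : nat) : L :=
  fr ((mm - (d - 2 - l) %% mm) %% mm) (synd a r (d - 2 - l)).

End Defs.

(* Main.v *)
Require Import Defs.
From HB Require Import structures.
From mathcomp Require Import all_boot all_order all_algebra all_field.
From Stdlib Require Import Classical.
From mathcomp Require Import zify.
Import GRing.Theory.
Local Open Scope ring_scope.
Set Implicit Arguments. Unset Strict Implicit.

Section Aux.
Variables (F : finFieldType) (L : fieldExtType F).
Local Notation q := (qq F).
Local Notation m := (mm L).
Local Notation fr := (@fr F L).

Lemma q_gt1 : (1 < q)%N.
Proof. exact: finNzRing_gt1. Qed.

Lemma m_gt0 : (0 < m)%N.
Proof. rewrite /mm. exact: (adim_gt0 (aspacef L)). Qed.

Lemma frq_add (x y : L) : (x + y) ^+ q = x ^+ q + y ^+ q.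
Proof.
rewrite /qq.
have [p _ pcharFp] := finPcharP F; rewrite (card_pprimeChar pcharFp).
elim: (logn _ _) => [|k IHk]; first by rewrite !expr1.
rewrite expnSr !exprM {}IHk.
by rewrite -(pchar_lalg L) in pcharFp; rewrite -!(pFrobenius_autE pcharFp) rmorphD.
Qed.

Lemma frS i (x : L) : fr i.+1 x = (fr i x) ^+ q.
Proof. by rewrite /Defs.fr expnSr exprM. Qed.

Lemma fr_add i (x y : L) : fr i (x + y) = fr i x + fr i y.
Proof. elim: i => [|i IH]; first by rewrite /Defs.fr !expr1. by rewrite !frS IH frq_add. Qed.

Lemma fr_mul i (x y : L) : fr i (x * y) = fr i x * fr i y.
Proof. by rewrite /Defs.fr exprMn. Qed.

Lemma fr0 i : fr i 0 = 0.
Proof. rewrite /Defs.fr expr0n. have /negbTE -> : (q ^ i != 0)%N by rewrite expn_eq0 negb_and -lt0n (ltnW q_gt1). by []. Qed.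

Lemma fr_sum i (I : Type) (r : seq I) (P : pred I) (G : I -> L) :
  fr i (\sum_(j <- r | P j) G j) = \sum_(j <- r | P j) fr i (G j).
Proof. by apply: (big_morph _ (fr_add i) (fr0 i)). Qed.

Lemma fr_alg i (a : F) : fr i (a%:A) = a%:A.
Proof.
elim: i => [|i IH]; first by rewrite /Defs.fr expr1.
by rewrite frS IH -in_algE -rmorphXn /qq expf_card.
Qed.

Lemma fr_scale i (a : F) (x : L) : fr i (a *: x) = a *: fr i x.
Proof. by rewrite -[a *: x]mulr_algl fr_mul fr_alg mulr_algl. Qed.

Lemma frfr i j (x : L) : fr i (fr j x) = fr (j + i) x.
Proof. by rewrite /Defs.fr -exprM -expnD. Qed.

Lemma fr_0 (x : L) : fr 0 x = x.
Proof. by rewrite /Defs.fr expr1. Qed.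

Lemma fr_1 (x : L) : fr 1 x = x ^+ q.
Proof. by rewrite /Defs.fr expn1. Qed.

Lemma card_finL : #|FinFieldExtType L| = (q ^ m)%N.
Proof.
have := @card_vspace F (FinFieldExtType L) (Vector.class L) fullv.
rewrite (@card_vspacef F (FinFieldExtType L) (Vector.class L)) => ->.
by [].
Qed.
Lemma fr_m (x : L) : fr m x = x.
Proof. by rewrite /Defs.fr -card_finL (expf_card (x : FinFieldExtType L)). Qed.
End Aux.

Section Aux2.
Variables (F : finFieldType) (L : fieldExtType F).
Local Notation q := (qq F).
Local Notation m := (mm L).
Local Notation fr := (@fr F L).

Lemma fixF (x : L) : x ^+ q = x -> exists a : F, x = a%:A.
Proof.
move=> xFx.
pose p := map_poly (in_alg L) ('X^#|F| - 'X).
have: root p x.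
  rewrite /p rmorphB /= map_polyXn map_polyX.
  by rewrite rootE !(hornerE, hornerXn) [x ^+ _]xFx subrr.
have ->: p = \prod_(z <- [seq b%:A | b : F]) ('X - z%:P).
  rewrite /p finField_genPoly rmorph_prod big_image /=.
  by apply: eq_bigr => b _; rewrite rmorphB /= map_polyX map_polyC.
by rewrite root_prod_XsubC => /mapP[a]; exists a.
Qed.

Definition Tr (y : L) := \sum_(j < m) fr j y.

Lemma Tr_F (y : L) : exists a : F, Tr y = a%:A.
Proof.
apply: fixF; rewrite -fr_1 /Tr fr_sum.
move: (fr_m y); have := @m_gt0 F L; case: (mm L) => // k _ Hm.
rewrite big_ord_recr big_ord_recl /= fr_0.
under eq_bigr do rewrite frfr addn1.
by rewrite frfr addn1 Hm addrC.
Qed.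

End Aux2.

Section Aux3.
Variables (F : finFieldType) (L : fieldExtType F).
Local Notation q := (qq F).
Local Notation m := (mm L).
Local Notation fr := (@fr F L).

Lemma mod_zero (P : {poly L}) : (forall x, P.[x] = 0) ->
  P %% ('X^(q ^ m) - 'X) = 0.
Proof.
move=> HP.
have qm1 : (1 < q ^ m)%N.
  by rewrite -{1}(expn0 q) ltn_exp2l ?(@q_gt1 F) ?(@m_gt0 F L).
set M := 'X^(q ^ m) - 'X.
have szM : size M = (q ^ m).+1.
  by rewrite /M size_polyDl ?size_polyXn // size_polyN size_polyX ltnS.
have M0 : M != 0 by rewrite -size_poly_gt0 szM.
set R := P %% M.
have RM : (size R < size M)%N by rewrite ltn_modp.
have Rx : forall x, R.[x] = 0.
  move=> x; have := HP x; rewrite (divp_eq P M) hornerD hornerM.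
  have -> : M.[x] = 0.
    by rewrite /M !hornerE -[x ^+ _]/(fr m x) (fr_m x) subrr.
  by rewrite mulr0 add0r.
apply/eqP; apply: contraT => nR.
have := @max_poly_roots _ R (enum (FinFieldExtType L)) nR.
have -> : all (root R) (enum (FinFieldExtType L)).
  by apply/allP => x _; rewrite /root Rx.
move=> /(_ isT (enum_uniq _)).
have -> : size (enum (FinFieldExtType L)) = (q ^ m)%N.
  by rewrite -card_finL cardT.
move=> h.
by move: RM; rewrite szM ltnS leqNgt h.
Qed.

End Aux3.

Section Aux4.
Variables (F : finFieldType) (L : fieldExtType F).
Local Notation q := (qq F).
Local Notation m := (mm L).
Local Notation fr := (@fr F L).

Lemma qlin_add (P : {poly L}) x y : Defs.qpoly P -> P.[x + y] = P.[x] + P.[y].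
Proof.
move=> hP; rewrite !horner_coef -big_split /=; apply: eq_bigr => k _.
case: (classic (exists i, nat_of_ord k = (q ^ i)%N)) => [[i ->]|H].
  by rewrite -![_ ^+ (q ^ i)]/(fr i _) fr_add mulrDr.
have -> : P`_k = 0 by apply: hP => i ki; apply: H; exists i.
by rewrite !mul0r addr0.
Qed.

Lemma qlin_scale (P : {poly L}) (a : F) x : Defs.qpoly P -> P.[a *: x] = a *: P.[x].
Proof.
move=> hP; rewrite !horner_coef scaler_sumr; apply: eq_bigr => k _.
case: (classic (exists i, nat_of_ord k = (q ^ i)%N)) => [[i ->]|H].
  by rewrite -![_ ^+ (q ^ i)]/(fr i _) fr_scale scalerAr.
have -> : P`_k = 0 by apply: hP => i ki; apply: H; exists i.
by rewrite !mul0r scaler0.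
Qed.

Lemma qlin_sum (P : {poly L}) k (b : 'I_k -> F) (v : 'I_k -> L) : Defs.qpoly P ->
  P.[\sum_(j < k) b j *: v j] = \sum_(j < k) b j *: P.[v j].
Proof.
move=> hP; apply: (big_rec2 (fun s t => P.[s] = t)).
  by have := qlin_scale (0 : F) 0 hP; rewrite !scale0r.
by move=> j s t _ <-; rewrite qlin_add // qlin_scale.
Qed.

Definition qp (a : nat -> L) (k : nat) : {poly L} :=
  \sum_(i < k.+1) a i *: 'X^(q ^ i).

Lemma coef_qp a k j : (qp a k)`_j = \sum_(i < k.+1) a i * (j == (q ^ i)%N)%:R.
Proof. by rewrite /qp coef_sum; apply: eq_bigr => i _; rewrite coefZ coefXn. Qed.

Lemma qeq i j : ((q ^ i)%N == (q ^ j)%N) = (i == j).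
Proof. exact: eqn_exp2l (@q_gt1 F). Qed.

Lemma qcoef_qp a k i : qcoef (qp a k) i = if (i <= k)%N then a i else 0.
Proof.
rewrite /qcoef coef_qp; case: ifP => hik.
  rewrite (bigD1 (Ordinal (hik : (i < k.+1)%N))) //= eqxx mulr1 big1 ?addr0 //.
  move=> j nj; rewrite qeq.
  have /negbTE -> : (i != j).
    by apply: contra nj => /eqP h; apply/eqP; apply: val_inj.
  by rewrite mulr0.
rewrite big1 // => j _; rewrite qeq.
have -> : (i == j) = false.
  by apply/negbTE; apply: contraFN hik => /eqP ->; rewrite -ltnS.
by rewrite mulr0.
Qed.

Lemma qpolyQ a k : Defs.qpoly (qp a k).
Proof.
move=> j H; rewrite coef_qp big1 // => i _.
have -> : (j == (q ^ i)%N) = false by apply/negbTE/eqP/H.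
by rewrite mulr0.
Qed.

Lemma horner_qp a k x : (qp a k).[x] = \sum_(i < k.+1) a i * fr i x.
Proof. by rewrite /qp horner_sum; apply: eq_bigr => i _; rewrite hornerZ hornerXn. Qed.

Lemma qdeg_qp a k : (qdeg (qp a k) <= k)%N.
Proof.
rewrite /qdeg; apply/bigmax_leqP => i; rewrite qcoef_qp.
by case: ifP => //; rewrite eqxx.
Qed.

Lemma qexpand (P : {poly L}) k : Defs.qpoly P ->
  (forall i, (k < i)%N -> qcoef P i = 0) -> P = qp (qcoef P) k.
Proof.
move=> hP hk; apply/polyP => j; rewrite coef_qp.
case: (classic (exists i, j = (q ^ i)%N)) => [[i ->]|H].
  case: (leqP i k) => hik.
    rewrite (bigD1 (Ordinal (hik : (i < k.+1)%N))) //= eqxx mulr1 big1 ?addr0 //.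
    move=> j' nj; rewrite qeq.
    have /negbTE -> : (i != j').
      by apply: contra nj => /eqP h; apply/eqP; apply: val_inj.
    by rewrite mulr0.
  rewrite -/(qcoef P i) hk // big1 // => j' _; rewrite qeq.
  have -> : (i == j') = false.
    by apply/negbTE; apply: contraTN hik => /eqP ->; rewrite -leqNgt -ltnS.
  by rewrite mulr0.
have -> : P`_j = 0 by apply: hP => i ji; apply: H; exists i.
rewrite big1 // => i _.
have -> : (j == (q ^ i)%N) = false by apply/negbTE/eqP => ji; apply: H; exists i.
by rewrite mulr0.
Qed.

End Aux4.

Section Aux5.
Variables (F : finFieldType) (L : fieldExtType F).
Local Notation q := (qq F).
Local Notation m := (mm L).
Local Notation fr := (@fr F L).
Local Notation qp := (@qp F L).

Lemma annih (s : seq L) : exists a : nat -> L,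
  [/\ a 0%N = 1, forall i, (size s < i)%N -> a i = 0 &
      forall v, v \in s -> (qp a (size s)).[v] = 0].
Proof.
elim: s => [|v s [a [a0 ai av]]].
  exists (fun i => if i == 0%N then 1 else 0); split => //.
  by case.
set k := size s.
pose y := (qp a k).[v].
pose c := y / y ^+ q.
pose a' := fun i => a i - c * (if i is j.+1 then a j ^+ q else 0).
have hq0 : (q != 0)%N by case: q (@q_gt1 F).
have ev x : (qp a' k.+1).[x] = (qp a k).[x] - c * (qp a k).[x] ^+ q.
  rewrite !horner_qp -fr_1 fr_sum.
  rewrite /a'; under eq_bigr do rewrite mulrBl.
  rewrite sumrB; congr (_ - _).
    by rewrite big_ord_recr /= ai ?mul0r ?addr0.
  rewrite big_ord_recl /= mulr0 mul0r add0r mulr_sumr.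
  apply: eq_bigr => i _; rewrite fr_mul frfr fr_1 addn1 mulrA /bump leq0n add1n.
  by [].
exists a'; split.
- by rewrite /a' a0 mulr0 subr0.
- move=> i /= hi; rewrite /a' ai; last by apply: ltn_trans hi.
  case: i hi => [//|j] hj; rewrite ai //.
  by rewrite expr0n (negbTE hq0) mulr0 subrr.
- move=> x; rewrite inE => /orP[/eqP ->|xs]; rewrite ev.
    rewrite -/y /c; case: (eqVneq y 0) => [->|ny]; first by rewrite !mul0r subrr.
    by rewrite divfK ?subrr // expf_neq0.
  by rewrite av // expr0n (negbTE hq0) mulr0 subrr.
Qed.

Lemma min_bound (S : L -> Prop) (M : {poly L}) (s : seq L) :
  min_qpoly S M -> (forall x, S x -> x \in s) ->
  M = qp (qcoef M) (size s).
Proof.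
move=> [hM hM0 hMr hMmin] hs.
have [a [a0 ai av]] := annih s.
have hd := hMmin (qp a (size s)) (qpolyQ a (size s)).
have := hd; rewrite qcoef_qp leq0n a0 => /(_ erefl).
have hr : forall x, S x -> root (qp a (size s)) x.
  by move=> x Sx; rewrite /root av ?hs.
move=> /(_ hr) hdeg.
apply: qexpand => // i hi.
case: (ltnP i (size M)) => hiM.
  apply/eqP; apply: contraTT hi => nz.
  rewrite -leqNgt; apply: leq_trans (qdeg_qp a (size s)).
  apply: leq_trans hdeg.
  exact: (leq_bigmax_cond (Ordinal hiM) nz).
rewrite /qcoef nth_default //; apply: leq_trans hiM _.
exact: ltnW (ltn_expl i (@q_gt1 F)).
Qed.

End Aux5.

Section Aux6.
Variables (F : finFieldType) (L : fieldExtType F).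
Local Notation q := (qq F).
Local Notation m := (mm L).
Local Notation fr := (@fr F L).

Lemma fr_mult c (y : L) : fr (c * m) y = y.
Proof.
elim: c => [|c IH]; first by rewrite mul0n fr_0.
by rewrite mulSn addnC -frfr IH fr_m.
Qed.

Definition uu (s : nat) := ((m - s %% m) %% m)%N.

Lemma Zfr s (y : L) : fr (uu s + s) y = y.
Proof.
have hm := @m_gt0 F L.
have hd : (m %| uu s + s)%N.
  rewrite /dvdn /uu modnDml -modnDmr subnK ?modnn //.
  by apply: ltnW; rewrite ltn_pmod.
by rewrite -(divnK hd) fr_mult.
Qed.

Lemma Zshift s0 i (y : L) : fr (uu (s0 + i) + i) y = fr (uu s0) y.
Proof.
rewrite -{1}(Zfr s0 y) frfr.
set a := uu s0; set b := uu (s0 + i).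
have -> : (a + s0 + (b + i) = (b + (s0 + i)) + a)%N.
  by rewrite [RHS]addnC -!addnA; congr (_ + _); rewrite addnCA addnA.
by rewrite -frfr Zfr.
Qed.

Lemma ann_span (P : {poly L}) k (W t : 'I_k -> L) : Defs.qpoly P ->
  (forall j, P.[W j] = 0) -> (forall j, exists b : F, t j = b%:A) ->
  P.[\sum_(j < k) W j * t j] = 0.
Proof.
move=> hP hW ht; apply: (big_rec (fun s => P.[s] = 0)).
  by have := qlin_scale (0 : F) 0 hP; rewrite !scale0r.
move=> j s _ hs; rewrite qlin_add // hs addr0.
have [b ->] := ht j; rewrite mulr_algr qlin_scale // hW scaler0 //.
Qed.

End Aux6.

Unset Implicit Arguments.
Set Strict Implicit.

Theorem theorem2 (F : finFieldType) (L : fieldExtType F)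
  (n d tau : nat) (alpha : L)
  (c e : 'I_n -> L) (Lc : 'I_tau -> 'I_n -> F) (V : 'I_tau -> L)
  (Gamma Lambda : {poly L}) :
  (n <= mm L)%N ->
  normal_elt alpha ->
  (2 <= d)%N ->
  gabidulin d alpha c ->
  qrank e = tau ->
  (tau.*2 <= d - 1)%N ->
  (forall i, e i = \sum_(j < tau) Lc j i *: V j) ->
  min_qpoly (fun x => exists j, x = V j) Gamma ->
  min_qpoly (fun x => exists j,
               x = \sum_(i < n) Lc j i *: fr i alpha) Lambda ->
  let r := fun i => c i + e i in
  (Gamma \Po qtrans alpha e) %% ('X^(qq F ^ mm L) - 'X) = 0 /\
  (Lambda \Po qrev_full (qtrans_coef alpha e)) %% ('X^(qq F ^ mm L) - 'X) = 0 /\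
  (forall l, (tau <= l <= d - 2)%N ->
     \sum_(i < tau.+1) qcoef Gamma i * fr i (synd alpha r (l - i)) = 0) /\
  (forall l, (tau <= l <= d - 2)%N ->
     \sum_(i < tau.+1) qcoef Lambda i * fr i (synd_tilde d alpha r (l - i)) = 0).
Proof.
move=> _ _ _ hgab _ _ He hG hL r.
pose X k := \sum_(i < n) Lc k i *: fr i alpha.
have Edec : forall j, qtrans_coef alpha e j = \sum_(k < tau) V k * fr j (X k).
  move=> j; rewrite /qtrans_coef.
  under eq_bigr do rewrite He mulr_suml.
  rewrite exchange_big /=; apply: eq_bigr => k _.
  rewrite /X fr_sum mulr_sumr; apply: eq_bigr => i _.
  by rewrite fr_scale frfr -scalerAl scalerAr.
have GX : Gamma = qp (qcoef Gamma) tau.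
  have := min_bound (s := [seq V k | k <- enum 'I_tau]) hG.
  rewrite size_map size_enum_ord; apply.
  by move=> x [j ->]; apply: map_f; rewrite mem_enum.
have LX : Lambda = qp (qcoef Lambda) tau.
  have := min_bound (s := [seq X k | k <- enum 'I_tau]) hL.
  rewrite size_map size_enum_ord; apply.
  by move=> x [j ->]; apply: map_f; rewrite mem_enum.
have [hGq _ hGr _] := hG.
have [hLq _ hLr _] := hL.
have GV : forall k, Gamma.[V k] = 0.
  by move=> k; apply/eqP; apply: hGr; exists k.
have LV : forall k, Lambda.[X k] = 0.
  by move=> k; apply/eqP; apply: hLr; exists k.
have SE : forall j, (j <= d - 2)%N -> synd alpha r j = qtrans_coef alpha e j.
  move=> j hj; rewrite /synd /qtrans_coef /r.
  under eq_bigr do rewrite mulrDr.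
  rewrite big_split /=.
  have -> : \sum_(i < n) fr (i + j) alpha * c i = 0.
    by rewrite -[RHS](hgab j hj); apply: eq_bigr => i _; rewrite addnC.
  by rewrite add0r; apply: eq_bigr => i _; rewrite mulrC.
split; [|split; [|split]].
- apply: mod_zero => x; rewrite horner_comp.
  rewrite /qtrans /qpoly_of horner_sum.
  under eq_bigr do rewrite hornerZ hornerXn Edec mulr_suml.
  rewrite exchange_big /=.
  have ht : forall k, exists b : F, Tr (X k * x) = b%:A by move=> k; apply: Tr_F.
  rewrite -[RHS](ann_span hGq GV ht).
  congr (_.[_]); apply: eq_bigr => k _; rewrite /Tr mulr_sumr.
  by apply: eq_bigr => j _; rewrite fr_mul mulrA.
- apply: mod_zero => x; rewrite horner_comp /qrev_full /qpoly_of horner_sum.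
  under eq_bigr do rewrite hornerZ hornerXn Edec fr_sum mulr_suml.
  rewrite exchange_big /=.
  have ht : forall k, exists b : F, Tr (V k * x) = b%:A by move=> k; apply: Tr_F.
  rewrite -[RHS](ann_span hLq LV ht).
  congr (_.[_]); apply: eq_bigr => k _; rewrite /Tr mulr_sumr.
  apply: eq_bigr => i _; rewrite !fr_mul frfr.
  rewrite -[(_ + i)%N]/(uu L i + i)%N Zfr.
  by rewrite [fr i (V k) * _]mulrC -mulrA.
- move=> l /andP[hl1 hl2].
  have hV k : \sum_(i < tau.+1) qcoef Gamma i * fr i (V k) = 0.
    by rewrite -horner_qp -GX GV.
  rewrite (eq_bigr (fun i : 'I_tau.+1 => \sum_(k < tau)
      qcoef Gamma i * (fr i (V k) * fr l (X k)))); last first.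
    move=> i _; have hi : (i <= l)%N by apply: leq_trans hl1; rewrite -ltnS.
    rewrite SE; last by apply: leq_trans hl2; apply: leq_subr.
    rewrite Edec fr_sum mulr_sumr; apply: eq_bigr => k _.
    by rewrite fr_mul frfr subnK.
  rewrite exchange_big big1 // => k _.
  transitivity ((\sum_(i < tau.+1) qcoef Gamma i * fr i (V k)) * fr l (X k)).
    by rewrite mulr_suml; apply: eq_bigr => i _; rewrite mulrA.
  by rewrite hV mul0r.
- move=> l /andP[hl1 hl2].
  set s0 := (d - 2 - l)%N.
  have hV k : \sum_(i < tau.+1) qcoef Lambda i * fr i (X k) = 0.
    by rewrite -horner_qp -LX LV.
  have Zf : forall s (y : L), fr (uu L s) (fr s y) = y.
    by move=> s y; rewrite frfr addnC Zfr.
  rewrite (eq_bigr (fun i : 'I_tau.+1 => \sum_(k < tau)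
      qcoef Lambda i * (fr (uu L s0) (V k) * fr i (X k)))); last first.
    move=> i _; have hi : (i <= l)%N by apply: leq_trans hl1; rewrite -ltnS.
    rewrite /synd_tilde SE; last by apply: leq_subr.
    rewrite Edec.
    have -> : (d - 2 - (l - i) = s0 + i)%N.
      rewrite /s0; move: hi hl2; clear; move=> hi hl2.
      lia.
    rewrite -[((mm L - _ %% mm L) %% mm L)%N]/(uu L (s0 + i)).
    rewrite fr_sum fr_sum mulr_sumr; apply: eq_bigr => k _.
    by rewrite fr_mul Zf fr_mul frfr Zshift.
  rewrite exchange_big big1 // => k _.
  transitivity (fr (uu L s0) (V k) * \sum_(i < tau.+1) qcoef Lambda i * fr i (X k)).
    by rewrite mulr_sumr; apply: eq_bigr => i _; rewrite mulrCA.
  by rewrite hV mulr0.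
Qed.
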